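(* Let $m\ge1$, $n\ge1$, fix $t_0\in\mathbb{Z}^m$ and let $\mathcal{Z}=\{t\in\mathbb{Z}^m\mid t\ge t_0\}$. Let $T=(T^1,\dots,T^m)\in\mathbb{N}^m$, $T\ne0$. Let $A_\alpha\colon\mathcal{Z}\to\mathcal{M}_n(\mathbb{C})$, $\alpha\in\{1,\dots,m\}$, satisfy $$A_\alpha(t+1_\beta)A_\beta(t)=A_\beta(t+1_\alpha)A_\alpha(t),\quad \forall t\in\mathcal{Z},\ \forall\alpha,\beta,$$ and suppose $A_\alpha(t)$ is invertible for all $\alpha$ and all $t\in\mathcal{Z}$. Let $\Phi(t)=\chi(t,t_0)$, $t\in\mathcal{Z}$. Assume there exist a function $P\colon\mathcal{Z}\to\mathcal{M}_n(\mathbb{C})$, periodic of period $T$ (i.e. $P(t+T)=P(t)$ for all $t\in\mathcal{Z}$), and a constant invertible matrix $B\in\mathcal{M}_n(\mathbb{C})$ such that $\Phi(t)=P(t)B^{|t|}$ for all $t\ge t_0$, where $|t|=t^1+\dots+t^m$. Consider the recurrences $$x(t+1_\alpha)=A_\alpha(t)x(t),\quad\forall t\ge t_0,\ \forall\alpha\in\{1,\dots,m\},\qquad (1)$$ $$y(t+1_\alpha)=B\,y(t),\quad\forall t\ge t_0,\ \forall\alpha\in\{1,\dots,m\},\qquad (2)$$ for functions $x,y\colon\mathcal{Z}\to\mathbb{C}^n$. Then (each $P(t)$ being invertible) if $y$ is a solution of (2), then $x(t):=P(t)y(t)$ is a solution of (1); and conversely, if $x$ is a solution of (1), then $y(t):=P(t)^{-1}x(t)$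 is a solution of (2).
   Context: $\mathbb{N}=\{0,1,2,\dots\}$; $1_\alpha\in\mathbb{Z}^m$ has $1$ in position $\alpha$ and $0$ elsewhere; $s\le t$ in $\mathbb{Z}^m$ means $s^\alpha\le t^\alpha$ for all $\alpha$. Under the compatibility relations, for each $s\in\mathcal{Z}$ there is a unique $\chi(\cdot,s)\colon\{t\in\mathcal{Z}\mid t\ge s\}\to\mathcal{M}_n(\mathbb{C})$ with $\chi(s,s)=I_n$ and $\chi(t+1_\alpha,s)=A_\alpha(t)\chi(t,s)$ for all $t\ge s$ and all $\alpha$ (the transition matrix). Negative integer powers of $B$ are powers of $B^{-1}$. *)

(* Defs.v *)
(* complex numbers are R[i] for R : realType (i.e. C). *)
From HB Require Import structures.
From mathcomp Require Import all_boot all_order all_algebra.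
From mathcomp Require Import complex.
From mathcomp Require Import reals.
Set Implicit Arguments. Unset Strict Implicit. Unset Printing Implicit Defensive.
Import Order.TTheory GRing.Theory Num.Theory.
Local Open Scope ring_scope.

(* points of Z^m are row vectors 'rV[int]_m *)
Definition ptle (m : nat) (s t : 'rV[int]_m) : Prop := forall i : 'I_m, s 0 i <= t 0 i.

Definition unitv (m : nat) (a : 'I_m) : 'rV[int]_m := delta_mx 0 a.

Definition sumpt (m : nat) (t : 'rV[int]_m) : int := \sum_(i < m) t 0 i.

(* Main.v *)
Require Import Defs.
From HB Require Import structures.
From mathcomp Require Import all_boot all_order all_algebra.
From mathcomp Require Import complex.
From mathcomp Require Import reals.
Import Order.TTheory GRing.Theory Num.Theory.
Local Open Scope ring_scope.
Local Open Scope complex_scope.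

Lemma unitvE (m : nat) (a i : 'I_m) : unitv a 0 i = (a == i)%:R.
Proof. by rewrite /unitv mxE /= eq_sym. Qed.

Lemma sumpt_step (m : nat) (t : 'rV[int]_m) (a : 'I_m) :
  sumpt (t + unitv a) = sumpt t + 1.
Proof.
rewrite /sumpt.
under eq_bigr => i _ do rewrite mxE.
rewrite big_split /=; congr (_ + _).
rewrite (bigD1 a) //= big1 ?unitvE ?eqxx ?addr0 // => i /negPf.
by rewrite unitvE eq_sym => ->.
Qed.

Lemma ptle_step (m : nat) (t0 t : 'rV[int]_m) (a : 'I_m) :
  ptle t0 t -> ptle t0 (t + unitv a).
Proof.
move=> h i; rewrite mxE unitvE.
by apply: (le_trans (h i)); rewrite lerDl ler0n.
Qed.

Lemma Phi_unit (R : realType) (m n : nat) (t0 : 'rV[int]_m)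
  (A : 'I_m -> 'rV[int]_m -> 'M[R[i]]_n.+1)
  (hAinv : forall t, ptle t0 t -> forall a : 'I_m, A a t \in unitmx)
  (Phi : 'rV[int]_m -> 'M[R[i]]_n.+1)
  (hPhi0 : Phi t0 = 1)
  (hPhiS : forall t, ptle t0 t -> forall a : 'I_m,
      Phi (t + unitv a) = A a t * Phi t) :
  forall t, ptle t0 t -> Phi t \in unitmx.
Proof.
suff H : forall k : nat, forall t, ptle t0 t -> sumpt (t - t0) = k%:Z ->
   Phi t \in unitmx.
  move=> t ht; apply: (H `|sumpt (t - t0)|%N t ht).
  rewrite gez0_abs // /sumpt; apply: sumr_ge0 => i _.
  by rewrite !mxE subr_ge0 ht.
elim=> [|k IH] t ht hs.
  have -> : t = t0.
    have h0 := hs.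
    rewrite /sumpt in h0.
    apply/matrixP => i j; rewrite (ord1 i).
    have hge : forall j : 'I_m, true -> 0 <= (t - t0) 0 j.
      by move=> j' _; rewrite !mxE subr_ge0 ht.
    have := psumr_eq0P hge h0 (i := j) isT.
    by rewrite !mxE => /eqP; rewrite subr_eq0 => /eqP.
  by rewrite hPhi0 unitmx1.
have [a ha] : exists a, t0 0 a < t 0 a.
  case: (pickP (fun a => t0 0 a < t 0 a)) => [a0 ha0|Hn]; first by exists a0.
  exfalso.
  have : sumpt (t - t0) = 0.
    rewrite /sumpt big1 // => i _; rewrite !mxE.
    by have := Hn i; move/negbT; rewrite -leNgt => hl; apply/eqP; rewrite subr_eq0 eq_le hl ht.
  by rewrite hs.
set t' := t - unitv a.
have ht' : ptle t0 t'.
  move=> i; rewrite /t' !mxE /=.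
  case: (eqVneq i a) => [->|_]; last by rewrite subr0 ht.
  by rewrite lerBrDr; have := ha; rewrite -lezD1.
have et : t = t' + unitv a by rewrite /t' subrK.
have hs' : sumpt (t' - t0) = k%:Z.
  have : sumpt (t' - t0 + unitv a) = k.+1%:Z by rewrite addrAC -et.
  rewrite sumpt_step => h; apply: (addIr 1); rewrite h -addn1 PoszD.
  by [].
rewrite et hPhiS // unitmx_mul hAinv //=.
exact: (IH t' ht' hs').
Qed.

Theorem theorem2p18 (R : realType) (m n : nat) (hm : (0 < m)%N)
  (t0 : 'rV[int]_m) (T : 'rV[int]_m)
  (hT0 : forall i : 'I_m, 0 <= T 0 i) (hT : T != 0)
  (A : 'I_m -> 'rV[int]_m -> 'M[R[i]]_n.+1)
  (hcompat : forall t, ptle t0 t -> forall a b : 'I_m,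
      A a (t + unitv b) * A b t = A b (t + unitv a) * A a t)
  (hAinv : forall t, ptle t0 t -> forall a : 'I_m, A a t \in unitmx)
  (Phi : 'rV[int]_m -> 'M[R[i]]_n.+1)
  (hPhi0 : Phi t0 = 1)
  (hPhiS : forall t, ptle t0 t -> forall a : 'I_m,
      Phi (t + unitv a) = A a t * Phi t)
  (P : 'rV[int]_m -> 'M[R[i]]_n.+1)
  (hPper : forall t, ptle t0 t -> P (t + T) = P t)
  (B : 'M[R[i]]_n.+1) (hB : B \in unitmx)
  (hfloq : forall t, ptle t0 t -> Phi t = P t * B ^ (sumpt t)) :
  (forall t, ptle t0 t -> P t \in unitmx) /\
  (forall y : 'rV[int]_m -> 'cV[R[i]]_n.+1,
     (forall t, ptle t0 t -> forall a : 'I_m, y (t + unitv a) = B *m y t) ->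
     forall t, ptle t0 t -> forall a : 'I_m,
       P (t + unitv a) *m y (t + unitv a) = A a t *m (P t *m y t)) /\
  (forall x : 'rV[int]_m -> 'cV[R[i]]_n.+1,
     (forall t, ptle t0 t -> forall a : 'I_m, x (t + unitv a) = A a t *m x t) ->
     forall t, ptle t0 t -> forall a : 'I_m,
       invmx (P (t + unitv a)) *m x (t + unitv a) = B *m (invmx (P t) *m x t)).
Proof.
have hPhiU := @Phi_unit R m n t0 A hAinv Phi hPhi0 hPhiS.
have hBz : forall z : int, B ^ z \in unitmx by move=> z; exact: unitrXz.
have hPU : forall t, ptle t0 t -> P t \in unitmx.
  move=> t ht; have := hPhiU t ht; rewrite hfloq //.
  by rewrite -mulmxE unitmx_mul => /andP[].
have K : forall t, ptle t0 t -> forall a,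
    P (t + unitv a) * B = A a t * P t.
  move=> t ht a.
  have := hPhiS t ht a; rewrite (hfloq _ (@ptle_step m t0 t a ht)) (hfloq _ ht).
  rewrite sumpt_step (addrC (sumpt t)) exprzDr // expr1z mulrA mulrA.
  exact: (mulIr (hBz _)).
split; first exact: hPU.
split.
  move=> y hy t ht a; rewrite hy // mulmxA mulmxE K // -mulmxE mulmxA.
  by [].
move=> x hx t ht a.
have eA : A a t = P (t + unitv a) *m B *m invmx (P t).
  by rewrite mulmxE K // -!mulmxE mulmxK // hPU.
rewrite hx // eA -!mulmxA mulKmx //.
exact: hPU _ (@ptle_step m t0 t a ht).
Qed.
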